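(* A nonnegative random variable $X$ with survival function $\overline{F}(x) = \mathbb{P}(X>x)$ is completely subscalable if and only if the function $h(x) := x \, \overline{F}(x)$ is increasing (non-decreasing) on $(0, \infty)$.
   Context: A nonnegative random variable $X$ with survival function $\overline{F}$ is called completely subscalable if $\theta \, \overline{F}(x) \leq \overline{F}(x/\theta)$ for all $x \geq 0$ and all $\theta \in (0,1)$. *)

(* Defs.v *)
From HB Require Import structures.
From mathcomp Require Import all_boot all_order all_algebra.
From mathcomp Require Import all_classical all_reals all_analysis.
Set Implicit Arguments. Unset Strict Implicit. Unset Printing Implicit Defensive.
Import Order.TTheory GRing.Theory Num.Theory.
Local Open Scope classical_set_scope.
Local Open Scope ring_scope.

Definition survival (d : measure_display) (T : measurableType d) (R : realType)
  (P : probability T R) (X : {RV P >-> R}) (x : R) : R :=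
  fine (P [set w | x < X w]).

Definition completely_subscalable (d : measure_display) (T : measurableType d)
  (R : realType) (P : probability T R) (X : {RV P >-> R}) : Prop :=
  forall (x theta : R), 0 <= x -> 0 < theta -> theta < 1 ->
    theta * survival X x <= survival X (x / theta).

(* Main.v *)
Require Import Defs.
From HB Require Import structures.
From mathcomp Require Import all_boot all_order all_algebra.
From mathcomp Require Import all_classical all_reals all_analysis.
Import Order.TTheory GRing.Theory Num.Theory.
Local Open Scope classical_set_scope.
Local Open Scope ring_scope.

Lemma gen_equiv (R : realType) (S : R -> R) (S0 : 0 <= S 0) :
  (forall (x theta : R), 0 <= x -> 0 < theta -> theta < 1 ->
    theta * S x <= S (x / theta)) <->
  (forall x y : R, 0 < x -> x <= y -> x * S x <= y * S y).
Proof.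
split.
- move=> H x y x0 xy.
  have y0 : 0 < y by exact: lt_le_trans xy.
  case: (eqVneq x y) => [->|nxy]; first by [].
  have lt : x < y by rewrite lt_neqAle nxy xy.
  have t1 : x / y < 1 by rewrite ltr_pdivrMr // mul1r.
  have := H x (x / y) (ltW x0) (divr_gt0 x0 y0) t1.
  have -> : x / (x / y) = y by rewrite invf_div mulrA mulrC mulrA mulVf ?gt_eqF // mul1r.
  have -> : x * S x = y * (x / y * S x).
    by rewrite mulrA [y * _]mulrCA divff ?gt_eqF // mulr1.
  by move=> h; rewrite ler_pM2l.
- move=> H x th x0 th0 th1.
  case: (eqVneq x 0) => [->|nx].
    by rewrite mul0r ler_piMl // ltW.
  have xp : 0 < x by rewrite lt_neqAle eq_sym nx x0.
  have xy : x <= x / th by rewrite ler_pdivlMr // ler_piMr // ltW.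
  have := H x (x / th) xp xy.
  have -> : x * S x = x / th * (th * S x).
    by rewrite mulrA divfK ?gt_eqF.
  by rewrite ler_pM2l // divr_gt0.
Qed.

Theorem lemma6 (d : measure_display) (T : measurableType d) (R : realType)
  (P : probability T R) (X : {RV P >-> R})
  (X_nonneg : forall w, 0 <= X w) :
  completely_subscalable X <->
  (forall x y : R, 0 < x -> x <= y -> x * survival X x <= y * survival X y).
Proof.
apply: gen_equiv.
by rewrite /survival fine_ge0 // measure_ge0.
Qed.
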